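(* Let $a,b,c,d>0$ and let $G_B:\mathbb R^2\to\mathbb R^2$ be given by $G_B(0)=0$ and $G_B(u)=\frac{1}{|u|}\big((au_1^2+bu_2^2)u_1,\ (cu_1^2+du_2^2)u_2\big)$ for $u\neq0$. If $$\max\{a+c,b+d\}+2\sqrt{\max\{a,b\}}\sqrt{\max\{c,d\}}\le 2(b+c+2\sqrt{ad})$$ and $$2(b+c-2\sqrt{ad})\le\min\{a+c,b+d\}+2\sqrt{\min\{a,b\}}\sqrt{\min\{c,d\}},$$ then $G_B$ is monotone. If both inequalities are strict, then $G_B$ is $3$-monotone.
   Context: A map $F:\mathbb R^n\to\mathbb R^n$ is monotone if $(F(u)-F(v))\cdot(u-v)\ge0$ for all $u,v$; for $\alpha>0$ it is $\alpha$-monotone if there is $C>0$ with $(F(u)-F(v))\cdot(u-v)\ge C|u-v|^\alpha$ for all $u,v\in\mathbb R^n$. $|\cdot|$ is the Euclidean norm. *)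

(* Defs.v *)
From Stdlib Require Import Reals Lra.
Open Scope R_scope.

Definition vec2 := (R * R)%type.

Definition dot2 (u v : vec2) : R := fst u * fst v + snd u * snd v.
Definition sub2 (u v : vec2) : vec2 := (fst u - fst v, snd u - snd v).
Definition norm2 (u : vec2) : R := sqrt (fst u ^ 2 + snd u ^ 2).

Definition monotone2 (F : vec2 -> vec2) : Prop :=
  forall u v : vec2, 0 <= dot2 (sub2 (F u) (F v)) (sub2 u v).

Definition alpha_monotone2 (alpha : nat) (F : vec2 -> vec2) : Prop :=
  exists C : R, C > 0 /\
    forall u v : vec2, dot2 (sub2 (F u) (F v)) (sub2 u v) >= C * norm2 (sub2 u v) ^ alpha.

Definition G_B (a b c d : R) (u : vec2) : vec2 :=
  let u1 := fst u in let u2 := snd u in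
  if Req_EM_T (norm2 u) 0 then (0, 0)
  else ((a * u1 ^ 2 + b * u2 ^ 2) * u1 / norm2 u,
        (c * u1 ^ 2 + d * u2 ^ 2) * u2 / norm2 u).

(* Main.v *)
Require Import Defs.
From Stdlib Require Import Reals Lra Psatz Classical.
From Coquelicot Require Import Coquelicot.
Open Scope R_scope.

Lemma qf_nonneg (P R B X Y : R) : 0 <= P -> 0 <= R -> B * B <= 4 * P * R ->
  0 <= P * X^2 + R * Y^2 + B * X * Y.
Proof.
  intros HP HR HB.
  destruct (Req_dec P 0) as [E|E].
  - subst. assert (B * B <= 0) by lra. assert (B = 0) by nra. subst. nra.
  - assert (0 < P) by lra.
    assert (0 <= 4 * P * (P * X^2 + R * Y^2 + B * X * Y)).
    { replace (4 * P * (P * X^2 + R * Y^2 + B * X * Y)) with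
        ((2*P*X + B*Y)^2 + (4*P*R - B*B)*Y^2) by ring.
      apply Rplus_le_le_0_compat; [apply pow2_ge_0 | apply Rmult_le_pos; [lra | apply pow2_ge_0]]. }
    nra.
Qed.

Lemma amgm2 (X Y m k s t : R) : 0 <= X -> 0 <= Y -> 0 <= m -> 0 <= k -> 0 <= s -> 0 <= t ->
  X * Y = (m*k*s*t)^2 -> 2 * m * k * s * t <= X + Y.
Proof.
  intros. assert (hp : 0 <= m*k*s*t) by (repeat apply Rmult_le_pos; auto).
  replace (2*m*k*s*t) with (2*(m*k*s*t)) by ring.
  set (p := m*k*s*t) in *.
  assert (h2 : (2*p)*(2*p) <= (X+Y)*(X+Y)).
  { replace ((X+Y)*(X+Y)) with ((X-Y)*(X-Y) + 4*(X*Y)) by ring.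
    match goal with H : X * Y = _ |- _ => rewrite H end.
    pose proof (Rle_0_sqr (X-Y)). unfold Rsqr in *. nra. }
  destruct (Rle_lt_dec (2*p) (X+Y)); auto.
  assert ((X+Y)*(X+Y) < (2*p)*(2*p)) by (apply Rmult_le_0_lt_compat; lra). lra.
Qed.

Lemma pos4 (p q r w : R) : 0<=p -> 0<=q -> 0<=r -> 0<=w -> 0<=p*q*r*w.
Proof. intros. repeat apply Rmult_le_pos; auto. Qed.

Lemma key_alg (a b c d x y z1 z2 : R) : 0 < a -> 0 < b -> 0 < c -> 0 < d ->
  Rmax (a + c) (b + d) + 2 * sqrt (Rmax a b) * sqrt (Rmax c d)
     <= 2 * (b + c + 2 * sqrt (a * d)) ->
  2 * (b + c - 2 * sqrt (a * d))
     <= Rmin (a + c) (b + d) + 2 * sqrt (Rmin a b) * sqrt (Rmin c d) ->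
  0 <= (x^2+y^2)*((3*a*x^2+b*y^2)*z1^2 + 2*(b+c)*x*y*z1*z2 + (c*x^2+3*d*y^2)*z2^2)
        - ((a*x^2+b*y^2)*x*z1 + (c*x^2+d*y^2)*y*z2)*(x*z1+y*z2).
Proof.
  intros ha hb hc hd H1 H2.
  set (s := x^2). set (t := y^2). set (sg := s + t).
  assert (hs : 0 <= s) by (unfold s; nra). assert (ht : 0 <= t) by (unfold t; nra).
  set (A := a*s+b*t). set (C := c*s+d*t).
  assert (hA : 0 <= A) by (unfold A; nra). assert (hC : 0 <= C) by (unfold C; nra).
  set (k := sqrt (A*C)). set (m := sqrt (a*d)).
  assert (hk : k*k = A*C) by (apply sqrt_sqrt; nra).
  assert (hm : m*m = a*d) by (apply sqrt_sqrt; nra).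
  assert (hk0 : 0 <= k) by apply sqrt_pos. assert (hm0 : 0 <= m) by apply sqrt_pos.
  set (Ma := Rmax a b). set (Mc := Rmax c d). set (ma := Rmin a b). set (mc := Rmin c d).
  assert (hAM : A <= Ma * sg) by (unfold A, sg, Ma; pose proof (Rmax_l a b); pose proof (Rmax_r a b); nra).
  assert (hCM : C <= Mc * sg) by (unfold C, sg, Mc; pose proof (Rmax_l c d); pose proof (Rmax_r c d); nra).
  assert (hAm : ma * sg <= A) by (unfold A, sg, ma; pose proof (Rmin_l a b); pose proof (Rmin_r a b); nra).
  assert (hCm : mc * sg <= C) by (unfold C, sg, mc; pose proof (Rmin_l c d); pose proof (Rmin_r c d); nra).
  assert (hma : 0 <= ma) by (unfold ma; apply Rmin_glb; lra).
  assert (hmc : 0 <= mc) by (unfold mc; apply Rmin_glb; lra).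
  assert (hsg : 0 <= sg) by (unfold sg; lra).
  assert (hACM : A + C <= Rmax (a+c) (b+d) * sg)
    by (unfold A, C, sg; pose proof (Rmax_l (a+c) (b+d)); pose proof (Rmax_r (a+c) (b+d)); nra).
  assert (hACm : Rmin (a+c) (b+d) * sg <= A + C)
    by (unfold A, C, sg; pose proof (Rmin_l (a+c) (b+d)); pose proof (Rmin_r (a+c) (b+d)); nra).
  assert (hMa : 0 <= Ma) by (unfold Ma; pose proof (Rmax_l a b); lra).
  assert (hMc : 0 <= Mc) by (unfold Mc; pose proof (Rmax_l c d); lra).
  assert (hkM : k <= sqrt Ma * sqrt Mc * sg).
  { unfold k. rewrite <- sqrt_mult by lra.
    rewrite <- (sqrt_square sg hsg). rewrite <- sqrt_mult.
    - apply sqrt_le_1_alt. replace (Ma * Mc * (sg*sg)) with ((Ma*sg)*(Mc*sg)) by ring.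
      apply Rmult_le_compat; auto.
    - apply Rmult_le_pos; lra.
    - nra. }
  assert (hkm : sqrt ma * sqrt mc * sg <= k).
  { unfold k. rewrite <- sqrt_mult by lra.
    rewrite <- (sqrt_square sg hsg). rewrite <- sqrt_mult.
    - apply sqrt_le_1_alt. replace (ma * mc * (sg*sg)) with ((ma*sg)*(mc*sg)) by ring.
      apply Rmult_le_compat; nra.
    - nra.
    - nra. }
  pose proof (Rmult_le_compat_r sg _ _ hsg H1) as H1'.
  pose proof (Rmult_le_compat_r sg _ _ hsg H2) as H2'.
  fold m Ma Mc ma mc in H1', H2'.
  assert (U1 : A + C + 2*k <= 2*(b+c)*sg + 4*m*sg) by lra.
  assert (U2 : 2*(b+c)*sg - 4*m*sg <= A + C + 2*k) by lra.
  set (W := 2*(b+c)*sg - A - C).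
  set (P := A*t + 2*a*sg*s). set (R0 := C*s + 2*d*sg*t).
  match goal with |- 0 <= ?G => assert (E : G = P * z1^2 + R0 * z2^2 + (x*y*W) * z1 * z2) end.
  { unfold P, R0, W, sg, A, C, s, t. ring. }
  rewrite E.
  apply qf_nonneg.
  - unfold P. apply Rplus_le_le_0_compat; [apply Rmult_le_pos; lra|].
    apply Rmult_le_pos; [|exact hs]; apply Rmult_le_pos; [|exact hsg]; lra.
  - unfold R0. apply Rplus_le_le_0_compat; [apply Rmult_le_pos; lra|].
    apply Rmult_le_pos; [|exact ht]; apply Rmult_le_pos; [|exact hsg]; lra.
  - assert (HW : W*W <= (2*k+4*m*sg)*(2*k+4*m*sg)).
    { assert (-(2*k+4*m*sg) <= W <= 2*k+4*m*sg) by (unfold W; nra). nra. }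
    assert (HX : 2 * m * k * s * t * 2 * sg <= 2*d*A*t*t*sg + 2*a*C*s*s*sg).
    { assert (2 * m * k * s * t * 2 <= 2*d*A*t*t + 2*a*C*s*s).
      { assert (2 * m * k * s * t <= d*A*t*t + a*C*s*s).
        { apply amgm2; auto.
          - apply pos4; lra.
          - apply pos4; lra.
          - replace ((m*k*s*t)^2) with ((m*m)*(k*k)*(s*s)*(t*t)) by ring.
            rewrite hm, hk. ring. }
        lra. }
      nra. }
    assert (Est : (x*y)*(x*y) = s*t) by (unfold s, t; ring).
    replace (x*y*W*(x*y*W)) with ((x*y)*(x*y)*(W*W)) by ring. rewrite Est.
    assert (4*P*R0 = 4*(k*k*s*t + sg*(2*d*A*t*t + 2*a*C*s*s) + 4*(m*m)*sg*sg*s*t)).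
    { unfold P, R0. rewrite hk, hm. unfold sg. ring. }
    rewrite H. 
    assert (0 <= s*t) by nra.
    assert (s*t*(W*W) <= s*t*((2*k+4*m*sg)*(2*k+4*m*sg))) by (apply Rmult_le_compat_l; auto).
    nra.
Qed.

Definition F1 a b x y := (a*x^2+b*y^2)*x / sqrt(x^2+y^2).
Definition F2 c d x y := (c*x^2+d*y^2)*y / sqrt(x^2+y^2).

Lemma dpsi a b c d v1 v2 z1 z2 t : 0 < (v1+t*z1)^2+(v2+t*z2)^2 ->
  is_derive (fun t => F1 a b (v1+t*z1) (v2+t*z2) * z1 + F2 c d (v1+t*z1) (v2+t*z2) * z2) t
   (let x := v1+t*z1 in let y := v2+t*z2 in
    ((sqrt (x^2+y^2))^2*((3*a*x^2+b*y^2)*z1^2 + 2*(b+c)*x*y*z1*z2 + (c*x^2+3*d*y^2)*z2^2)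
        - ((a*x^2+b*y^2)*x*z1 + (c*x^2+d*y^2)*y*z2)*(x*z1+y*z2)) / (sqrt (x^2+y^2))^3).
Proof.
  intros H. pose proof (sqrt_lt_R0 _ H) as Hr. unfold F1, F2. auto_derive.
  - match goal with |- context [sqrt ?S] => replace (sqrt S) with (sqrt ((v1+t*z1)^2+(v2+t*z2)^2)) by (f_equal; ring) end.
    replace ((v1 + t * z1) * ((v1 + t * z1) * 1) + (v2 + t * z2) * ((v2 + t * z2) * 1)) with ((v1+t*z1)^2+(v2+t*z2)^2) by ring.
    repeat split; lra.
  - match goal with |- context [sqrt ?S] => replace (sqrt S) with (sqrt ((v1+t*z1)^2+(v2+t*z2)^2)) by (f_equal; ring) end.
    simpl. simpl in Hr. field. lra.
Qed.

Lemma G_B_eq a b c d u : G_B a b c d u = (F1 a b (fst u) (snd u), F2 c d (fst u) (snd u)).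
Proof.
  unfold G_B, F1, F2, norm2. destruct (Req_EM_T _ 0) as [E|E]; [|reflexivity].
  rewrite E. unfold Rdiv. rewrite Rinv_0. f_equal; ring.
Qed.

Lemma Rinv_nonneg' x : 0 <= x -> 0 <= / x.
Proof. intros H. destruct (Req_dec x 0) as [E|E]. - rewrite E, Rinv_0; lra. - left; apply Rinv_0_lt_compat; lra. Qed.

Lemma F1_hom a b l p q : F1 a b (l*p) (l*q) = l*Rabs l * F1 a b p q.
Proof.
  unfold F1. replace ((l*p)^2+(l*q)^2) with ((l*l)*(p^2+q^2)) by ring.
  rewrite sqrt_mult by nra. change (l*l) with (Rsqr l). rewrite sqrt_Rsqr_abs.
  destruct (Req_dec (sqrt (p^2+q^2)) 0) as [E|E].
  - rewrite E, Rmult_0_r. unfold Rdiv. rewrite !Rinv_0. ring.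
  - destruct (Req_dec l 0) as [El|El].
    + subst. rewrite Rabs_R0. unfold Rdiv. ring.
    + unfold Rabs; destruct (Rcase_abs l); field; lra.
Qed.

Lemma F2_hom c d l p q : F2 c d (l*p) (l*q) = l*Rabs l * F2 c d p q.
Proof.
  unfold F2. replace ((l*p)^2+(l*q)^2) with ((l*l)*(p^2+q^2)) by ring.
  rewrite sqrt_mult by nra. change (l*l) with (Rsqr l). rewrite sqrt_Rsqr_abs.
  destruct (Req_dec (sqrt (p^2+q^2)) 0) as [E|E].
  - rewrite E, Rmult_0_r. unfold Rdiv. rewrite !Rinv_0. ring.
  - destruct (Req_dec l 0) as [El|El].
    + subst. rewrite Rabs_R0. unfold Rdiv. ring.
    + unfold Rabs; destruct (Rcase_abs l); field; lra.
Qed.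

Lemma mono_core (a b c d : R) (ha : 0 < a) (hb : 0 < b) (hc : 0 < c) (hd : 0 < d) :
  Rmax (a + c) (b + d) + 2 * sqrt (Rmax a b) * sqrt (Rmax c d)
     <= 2 * (b + c + 2 * sqrt (a * d)) ->
  2 * (b + c - 2 * sqrt (a * d))
     <= Rmin (a + c) (b + d) + 2 * sqrt (Rmin a b) * sqrt (Rmin c d) ->
  monotone2 (G_B a b c d).
Proof.
  intros H1 H2 [u1 u2] [v1 v2]. rewrite !G_B_eq. unfold dot2, sub2; simpl.
  set (z1 := u1 - v1). set (z2 := u2 - v2).
  set (psi := fun t => F1 a b (v1+t*z1) (v2+t*z2) * z1 + F2 c d (v1+t*z1) (v2+t*z2) * z2).
  assert (E : (F1 a b u1 u2 - F1 a b v1 v2) * z1 + (F2 c d u1 u2 - F2 c d v1 v2) * z2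
              = psi 1 - psi 0).
  { unfold psi. replace (v1+1*z1) with u1 by (unfold z1; ring).
    replace (v2+1*z2) with u2 by (unfold z2; ring).
    replace (v1+0*z1) with v1 by ring. replace (v2+0*z2) with v2 by ring. ring. }
  rewrite E.
  destruct (classic (exists t0, 0<=t0<=1 /\ v1+t0*z1=0 /\ v2+t0*z2=0)) as [[t0 [Ht [E1 E2]]] | Hn].
  - unfold psi.
    replace (v1+1*z1) with ((1-t0)*z1) by lra. replace (v2+1*z2) with ((1-t0)*z2) by lra.
    replace (v1+0*z1) with ((-t0)*z1) by lra. replace (v2+0*z2) with ((-t0)*z2) by lra.
    rewrite !F1_hom, !F2_hom. rewrite Rabs_Ropp. rewrite (Rabs_pos_eq t0) by lra.
    rewrite (Rabs_pos_eq (1-t0)) by lra.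
    assert (0 <= F1 a b z1 z2 * z1 + F2 c d z1 z2 * z2).
    { unfold F1, F2, Rdiv.
      replace ((a * z1 ^ 2 + b * z2 ^ 2) * z1 * / sqrt (z1 ^ 2 + z2 ^ 2) * z1 +
               (c * z1 ^ 2 + d * z2 ^ 2) * z2 * / sqrt (z1 ^ 2 + z2 ^ 2) * z2)
        with ((a*(z1^2)^2 + (b+c)*(z1^2*z2^2) + d*(z2^2)^2) * / sqrt (z1 ^ 2 + z2 ^ 2)) by ring.
      apply Rmult_le_pos; [|apply Rinv_nonneg', sqrt_pos].
      assert (0 <= z1^2) by nra. assert (0 <= z2^2) by nra.
      assert (0 <= z1^2*z2^2) by (apply Rmult_le_pos; auto).
      apply Rplus_le_le_0_compat; [apply Rplus_le_le_0_compat|]; apply Rmult_le_pos; try lra;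
        try apply pow2_ge_0; auto. }
    assert (0 <= (1-t0)*(1-t0) + t0*t0) by nra.
    replace ((1 - t0) * (1 - t0) * F1 a b z1 z2 * z1 + (1 - t0) * (1 - t0) * F2 c d z1 z2 * z2 -
      (- t0 * t0 * F1 a b z1 z2 * z1 + - t0 * t0 * F2 c d z1 z2 * z2))
      with (((1-t0)*(1-t0) + t0*t0) * (F1 a b z1 z2 * z1 + F2 c d z1 z2 * z2)) by ring.
    apply Rmult_le_pos; auto.
  - assert (Hpos : forall t, 0<=t<=1 -> 0 < (v1+t*z1)^2 + (v2+t*z2)^2).
    { intros t Ht. destruct (Rle_lt_dec ((v1+t*z1)^2 + (v2+t*z2)^2) 0) as [L|L]; auto.
      exfalso. apply Hn. exists t. split; auto.
      pose proof (pow2_ge_0 (v1+t*z1)). pose proof (pow2_ge_0 (v2+t*z2)).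
      split; (apply NNPP; intro Hne; apply (pow_nonzero _ 2) in Hne; lra). }
    assert (Rmin 0 1 = 0) as Rm by (apply Rmin_left; lra).
    assert (Rmax 0 1 = 1) as RM by (apply Rmax_right; lra).
    destruct (MVT_gen psi 0 1 (fun t => let x := v1+t*z1 in let y := v2+t*z2 in
    ((sqrt (x^2+y^2))^2*((3*a*x^2+b*y^2)*z1^2 + 2*(b+c)*x*y*z1*z2 + (c*x^2+3*d*y^2)*z2^2)
        - ((a*x^2+b*y^2)*x*z1 + (c*x^2+d*y^2)*y*z2)*(x*z1+y*z2)) / (sqrt (x^2+y^2))^3))
      as [c0 [Hc Heq]].
    + intros x Hx. cbv zeta in Hx. rewrite Rm, RM in Hx. apply dpsi. apply Hpos; lra.
    + intros x Hx. cbv zeta in Hx. rewrite Rm, RM in Hx. apply continuity_pt_filterlim.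
      apply (ex_derive_continuous (K:=R_AbsRing) (V:=R_NormedModule)).
      eexists. apply dpsi. apply Hpos; lra.
    + cbv zeta in Hc. rewrite Rm, RM in Hc. rewrite Heq. cbv zeta.
      apply Rmult_le_pos; [|lra]. unfold Rdiv. apply Rmult_le_pos.
      * rewrite pow2_sqrt by (left; apply Hpos; lra). apply key_alg; auto.
      * apply Rinv_nonneg'. apply pow_le. apply sqrt_pos.
Qed.

Lemma sqrt_shift p q e : 0 < p -> 0 < q -> 0 <= e -> e <= p -> e <= q ->
  sqrt (p*q) - e*(p+q)/sqrt(p*q) <= sqrt ((p-e)*(q-e)) /\ sqrt ((p-e)*(q-e)) <= sqrt (p*q).
Proof.
  intros hp hq he hep heq.
  assert (hS : 0 < sqrt (p*q)) by (apply sqrt_lt_R0; nra).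
  assert (hS2 : sqrt (p*q) * sqrt (p*q) = p*q) by (apply sqrt_sqrt; nra).
  assert (hT2 : sqrt ((p-e)*(q-e)) * sqrt ((p-e)*(q-e)) = (p-e)*(q-e)) by (apply sqrt_sqrt; nra).
  pose proof (sqrt_pos ((p-e)*(q-e))) as hT.
  assert (HTS : sqrt ((p-e)*(q-e)) <= sqrt (p*q)) by (apply sqrt_le_1_alt; nra).
  split; auto.
  - set (S := sqrt (p*q)) in *. set (T := sqrt ((p-e)*(q-e))) in *.
    assert (S*S - T*T <= e*(p+q)) by nra.
    assert (T*(S-T) >= 0) by (apply Rle_ge, Rmult_le_pos; lra).
    assert (S*(S - T) <= e*(p+q)) by nra.
    apply (Rmult_le_reg_l S); auto. unfold Rdiv.
    replace (S * (S - e * (p + q) * / S)) with (S*S - e*(p+q)) by (field; lra). nra.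
Qed.

Lemma Rmax_shift x y e : Rmax (x - e) (y - e) = Rmax x y - e.
Proof. unfold Rmax; destruct (Rle_dec (x-e) (y-e)); destruct (Rle_dec x y); lra. Qed.
Lemma Rmin_shift x y e : Rmin (x - e) (y - e) = Rmin x y - e.
Proof. unfold Rmin; destruct (Rle_dec (x-e) (y-e)); destruct (Rle_dec x y); lra. Qed.

Lemma eps_exists (a b c d : R) (ha : 0 < a) (hb : 0 < b) (hc : 0 < c) (hd : 0 < d) :
  Rmax (a + c) (b + d) + 2 * sqrt (Rmax a b) * sqrt (Rmax c d)
     < 2 * (b + c + 2 * sqrt (a * d)) ->
  2 * (b + c - 2 * sqrt (a * d))
     < Rmin (a + c) (b + d) + 2 * sqrt (Rmin a b) * sqrt (Rmin c d) ->
  exists e, 0 < e /\ e < a /\ e < b /\ e < c /\ e < d /\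
  Rmax ((a-e) + (c-e)) ((b-e) + (d-e)) + 2 * sqrt (Rmax (a-e) (b-e)) * sqrt (Rmax (c-e) (d-e))
     <= 2 * ((b-e) + (c-e) + 2 * sqrt ((a-e) * (d-e))) /\
  2 * ((b-e) + (c-e) - 2 * sqrt ((a-e) * (d-e)))
     <= Rmin ((a-e) + (c-e)) ((b-e) + (d-e)) + 2 * sqrt (Rmin (a-e) (b-e)) * sqrt (Rmin (c-e) (d-e)).
Proof.
  intros H1 H2.
  set (Ma := Rmax a b) in *. set (Mc := Rmax c d) in *. set (ma := Rmin a b) in *. set (mc := Rmin c d) in *.
  assert (hma : 0 < ma) by (unfold ma; apply Rmin_glb_lt; lra).
  assert (hmc : 0 < mc) by (unfold mc; apply Rmin_glb_lt; lra).
  assert (hMa : ma <= Ma) by (unfold ma, Ma; pose proof (Rmin_l a b); pose proof (Rmax_l a b); lra).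
  assert (hMc : mc <= Mc) by (unfold mc, Mc; pose proof (Rmin_l c d); pose proof (Rmax_l c d); lra).
  assert (hmaa : ma <= a) by apply Rmin_l. assert (hmab : ma <= b) by apply Rmin_r.
  assert (hmcc : mc <= c) by apply Rmin_l. assert (hmcd : mc <= d) by apply Rmin_r.
  rewrite (Rmult_assoc 2 (sqrt Ma) (sqrt Mc)), <- (sqrt_mult Ma Mc) in H1 by lra.
  rewrite (Rmult_assoc 2 (sqrt ma) (sqrt mc)), <- (sqrt_mult ma mc) in H2 by lra.
  set (Sad := sqrt (a*d)) in *. set (SM := sqrt (Ma*Mc)) in *. set (Sm := sqrt (ma*mc)) in *.
  assert (hSad : 0 < Sad) by (apply sqrt_lt_R0; nra).
  assert (hSm : 0 < Sm) by (apply sqrt_lt_R0; nra).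
  set (g := Rmin (2 * (b + c + 2 * Sad) - (Rmax (a + c) (b + d) + 2 * SM))
                 (Rmin (a + c) (b + d) + 2 * Sm - 2 * (b + c - 2 * Sad))).
  assert (hg : 0 < g) by (unfold g; apply Rmin_glb_lt; lra).
  set (K := 2 + 4*(a+d)/Sad + 2*(ma+mc)/Sm).
  assert (hK : 0 < K).
  { unfold K. assert (0 < 4*(a+d)/Sad) by (apply Rdiv_lt_0_compat; lra).
    assert (0 < 2*(ma+mc)/Sm) by (apply Rdiv_lt_0_compat; lra). lra. }
  assert (hmm0 : 0 < Rmin ma mc) by (apply Rmin_glb_lt; lra).
  set (e := Rmin (Rmin ma mc / 2) (g / K)).
  assert (he : 0 < e) by (unfold e; apply Rmin_glb_lt; [lra | apply Rdiv_lt_0_compat; lra]).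
  assert (he1 : e <= Rmin ma mc / 2) by apply Rmin_l.
  assert (he2 : e <= g / K) by apply Rmin_r.
  assert (hmm : Rmin ma mc <= ma /\ Rmin ma mc <= mc) by (split; [apply Rmin_l | apply Rmin_r]).
  assert (heK : e * K <= g).
  { apply (Rmult_le_compat_r K) in he2; [|lra]. unfold Rdiv in he2.
    rewrite Rmult_assoc, Rinv_l, Rmult_1_r in he2 by lra. exact he2. }
  assert (hg1 : g <= 2 * (b + c + 2 * Sad) - (Rmax (a + c) (b + d) + 2 * SM)) by apply Rmin_l.
  assert (hg2 : g <= Rmin (a + c) (b + d) + 2 * Sm - 2 * (b + c - 2 * Sad)) by apply Rmin_r.
  exists e. repeat split; try lra.
  - replace (a - e + (c - e)) with ((a+c) - 2*e) by ring.
    replace (b - e + (d - e)) with ((b+d) - 2*e) by ring.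
    rewrite !Rmax_shift. fold Ma Mc. rewrite Rmult_assoc, <- sqrt_mult by lra.
    destruct (sqrt_shift Ma Mc e) as [_ HM]; try lra.
    destruct (sqrt_shift a d e) as [Had _]; try lra.
    fold Sad SM in HM, Had.
    assert (e * (4 * (a + d) / Sad) <= e*K - 2*e).
    { unfold K. assert (0 <= 2*(ma+mc)/Sm) by (apply Rlt_le, Rdiv_lt_0_compat; lra).
      assert (0 <= e * (2*(ma+mc)/Sm)) by (apply Rmult_le_pos; lra). nra. }
    assert (e * (4 * (a + d) / Sad) = 4*(e * (a + d) / Sad)) by (field; lra).
    nra.
  - replace (a - e + (c - e)) with ((a+c) - 2*e) by ring.
    replace (b - e + (d - e)) with ((b+d) - 2*e) by ring.
    rewrite !Rmin_shift. fold ma mc. rewrite Rmult_assoc, <- sqrt_mult by lra.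
    destruct (sqrt_shift ma mc e) as [Hm _]; try lra.
    destruct (sqrt_shift a d e) as [_ Had]; try lra.
    destruct (sqrt_shift a d e) as [Had' _]; try lra.
    fold Sad Sm in Hm, Had, Had'.
    assert (e * (4 * (a + d) / Sad) + e * (2*(ma+mc)/Sm) = e*K - 2*e) by (unfold K; field; lra).
    assert (e * (4 * (a + d) / Sad) = 4*(e * (a + d) / Sad)) by (field; lra).
    assert (e * (2*(ma+mc)/Sm) = 2*(e * (ma + mc) / Sm)) by (field; lra).
    nra.
Qed.

Lemma cube_mono u1 u2 v1 v2 :
  let r := sqrt (u1^2+u2^2) in let q := sqrt (v1^2+v2^2) in
  let D := sqrt ((u1-v1)^2+(u2-v2)^2) in
  D^3 / 2 <= (r*u1 - q*v1)*(u1-v1) + (r*u2 - q*v2)*(u2-v2).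
Proof.
  intros r q D.
  assert (hr : r*r = u1^2+u2^2) by (apply sqrt_sqrt; pose proof (pow2_ge_0 u1); pose proof (pow2_ge_0 u2); lra).
  assert (hq : q*q = v1^2+v2^2) by (apply sqrt_sqrt; pose proof (pow2_ge_0 v1); pose proof (pow2_ge_0 v2); lra).
  assert (hD : D*D = (u1-v1)^2+(u2-v2)^2) by (apply sqrt_sqrt; pose proof (pow2_ge_0 (u1-v1)); pose proof (pow2_ge_0 (u2-v2)); lra).
  assert (hr0 : 0 <= r) by apply sqrt_pos. assert (hq0 : 0 <= q) by apply sqrt_pos.
  assert (hD0 : 0 <= D) by apply sqrt_pos.
  set (uv := u1*v1+u2*v2).
  assert (Hcs : uv*uv <= (r*r)*(q*q)).
  { rewrite hr, hq. unfold uv.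
    replace ((u1 ^ 2 + u2 ^ 2) * (v1 ^ 2 + v2 ^ 2)) with ((u1*v1+u2*v2)^2 + (u1*v2-u2*v1)^2) by ring.
    pose proof (pow2_ge_0 (u1*v2-u2*v1)). nra. }
  assert (Huv : - (r*q) <= uv).
  { assert (0 <= r*q) by (apply Rmult_le_pos; auto).
    destruct (Rle_lt_dec (-(r*q)) uv); auto.
    assert ((r*q)*(r*q) < uv*uv) by nra. nra. }
  assert (HD2 : D*D = r*r + q*q - 2*uv) by (rewrite hD, hr, hq; unfold uv; ring).
  assert (HDle : D <= r + q).
  { destruct (Rle_lt_dec D (r+q)); auto. assert ((r+q)*(r+q) < D*D) by nra. nra. }
  assert (HE : (r*u1 - q*v1)*(u1-v1) + (r*u2 - q*v2)*(u2-v2)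
               = (r+q)*((r-q)*(r-q) + D*D)/2).
  { rewrite HD2. unfold uv.
    replace ((r*u1 - q*v1)*(u1-v1) + (r*u2 - q*v2)*(u2-v2))
      with (r*(u1^2+u2^2) + q*(v1^2+v2^2) - (r+q)*(u1*v1+u2*v2)) by ring.
    rewrite <- hr, <- hq. field. }
  rewrite HE.
  assert (0 <= (r+q)*((r-q)*(r-q))) by (apply Rmult_le_pos; [lra | apply Rle_0_sqr]).
  assert (D*(D*D) <= (r+q)*(D*D)) by (apply Rmult_le_compat_r; [apply Rle_0_sqr | lra]).
  replace (D^3) with (D*(D*D)) by ring.
  replace ((r+q)*((r-q)*(r-q) + D*D)/2) with (((r+q)*((r-q)*(r-q)) + (r+q)*(D*D))/2) by field.
  lra.
Qed.

Lemma F1_split a b e x y : F1 a b x y = F1 (a-e) (b-e) x y + e * sqrt (x^2+y^2) * x.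
Proof.
  unfold F1. destruct (Req_dec (sqrt (x^2+y^2)) 0) as [E|E].
  - rewrite E. unfold Rdiv. rewrite Rinv_0. ring.
  - assert (H : sqrt (x^2+y^2) * sqrt (x^2+y^2) = x^2+y^2) by (apply sqrt_sqrt; nra).
    set (rho := sqrt (x^2+y^2)) in *.
    assert (E2 : e*rho*x = e*(rho*rho)*x/rho) by (field; auto).
    rewrite E2, H. field. auto.
Qed.

Lemma F2_split c d e x y : F2 c d x y = F2 (c-e) (d-e) x y + e * sqrt (x^2+y^2) * y.
Proof.
  unfold F2. destruct (Req_dec (sqrt (x^2+y^2)) 0) as [E|E].
  - rewrite E. unfold Rdiv. rewrite Rinv_0. ring.
  - assert (H : sqrt (x^2+y^2) * sqrt (x^2+y^2) = x^2+y^2) by (apply sqrt_sqrt; nra).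
    set (rho := sqrt (x^2+y^2)) in *.
    assert (E2 : e*rho*y = e*(rho*rho)*y/rho) by (field; auto).
    rewrite E2, H. field. auto.
Qed.

Theorem mainTheorem5 (a b c d : R) (ha : 0 < a) (hb : 0 < b) (hc : 0 < c) (hd : 0 < d) :
  (Rmax (a + c) (b + d) + 2 * sqrt (Rmax a b) * sqrt (Rmax c d)
     <= 2 * (b + c + 2 * sqrt (a * d)) /\
   2 * (b + c - 2 * sqrt (a * d))
     <= Rmin (a + c) (b + d) + 2 * sqrt (Rmin a b) * sqrt (Rmin c d) ->
   monotone2 (G_B a b c d)) /\
  (Rmax (a + c) (b + d) + 2 * sqrt (Rmax a b) * sqrt (Rmax c d)
     < 2 * (b + c + 2 * sqrt (a * d)) /\
   2 * (b + c - 2 * sqrt (a * d))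
     < Rmin (a + c) (b + d) + 2 * sqrt (Rmin a b) * sqrt (Rmin c d) ->
   alpha_monotone2 3 (G_B a b c d)).
Proof.
  split.
  - intros [H1 H2]. apply mono_core; auto.
  - intros [H1 H2].
    destruct (eps_exists a b c d ha hb hc hd H1 H2) as [e [he [hea [heb [hec [hed [C1 C2]]]]]]].
    pose proof (mono_core (a-e) (b-e) (c-e) (d-e) ltac:(lra) ltac:(lra) ltac:(lra) ltac:(lra) C1 C2) as M.
    exists (e/2). split; [lra|].
    intros [u1 u2] [v1 v2]. specialize (M (u1,u2) (v1,v2)).
    unfold dot2, sub2, norm2 in *. rewrite !G_B_eq in *. cbn [fst snd] in *.
    rewrite (F1_split a b e u1 u2), (F1_split a b e v1 v2), (F2_split c d e u1 u2), (F2_split c d e v1 v2).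
    pose proof (cube_mono u1 u2 v1 v2) as CM. cbv zeta in CM.
    apply Rle_ge.
    set (D := sqrt ((u1 - v1) ^ 2 + (u2 - v2) ^ 2)) in *.
    set (T := ((sqrt (u1 ^ 2 + u2 ^ 2) * u1 - sqrt (v1 ^ 2 + v2 ^ 2) * v1) * (u1 - v1) +
       (sqrt (u1 ^ 2 + u2 ^ 2) * u2 - sqrt (v1 ^ 2 + v2 ^ 2) * v2) * (u2 - v2))) in *.
    match goal with |- _ <= ?X => assert (X = (F1 (a - e) (b - e) u1 u2 - F1 (a - e) (b - e) v1 v2) * (u1 - v1) +
       (F2 (c - e) (d - e) u1 u2 - F2 (c - e) (d - e) v1 v2) * (u2 - v2) + e * T) end.
    { unfold T. ring. }
    rewrite H. assert (e * (D^3/2) <= e * T) by (apply Rmult_le_compat_l; lra).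
    assert (e/2*D^3 = e*(D^3/2)) by field. lra.
Qed.
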